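(* Consider the tensor network template $(G,c)$ with the following data. - Three inputs $s_1,s_2,s_3$ and two outputs $t_1,t_2$. - Three vertices $v_1,v_2,v_3$. - Edges and capacities: - $s_2$–$v_1$, capacity $2$; - $v_1$–$v_2$, capacity $2$; - $v_1$–$v_3$, capacity $2$; - $s_1$–$v_2$, capacity $2$; - $v_2$–$t_1$, capacity $3$; - $s_3$–$v_3$, capacity $2$; - $v_3$–$t_2$, capacity $3$. Then $\mathrm{QMC}(G,c)=8$ and $\mathrm{QMF}(G,c)=7$.
   Context: A tensor network template $(G,c)$ consists of a finite undirected graph $G$ with edge set $E$ whose vertex set is partitioned as $S\sqcup T\sqcup V$. Every element of $S$ (inputs) and every element of $T$ (outputs) is an open end of degree $1$; the elements of $V$ are called vertices. For $u\in S\sqcup T$, $e(u)$ denotes the edge incident to $u$. A capacity function $c:E\to\mathbb{Z}_{>0}$ is given, and to each edge $e$ one associates $\mathbb{C}^{c_e}$ with a fixed basis. At each vertex $v$ of degree $d_v$ an ordering $e(v,1),\dots,e(v,d_v)$ of the incident edge-ends is fixed. A tensor assignment $\mathcal T=(\mathcal T_v)_{v\in V}$ chooses $\mathcal T_v\in\bigotimes_{i=1}^{d_v}\mathbb{C}^{c_{e(v,i)}}$ for each $v$. Let $V_S=\bigotimes_{u\in S}\mathbb{C}^{c_{e(u)}}$ and $V_T=\bigotimes_{u\in T}\mathbb{C}^{c_{e(u)}}$. Contracting the network along all edges gives $\beta(G,c;\mathcal T)\in\mathrm{Hom}(V_S,V_T)$, whose matrix entries are $\langle I_T|\beta|I_S\rangle=\sum_W\prod_{v\in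 V}(\mathcal T_v)_{W|_v}$. Here $W$ ranges over all assignments of basis indices to all edges that agree with $I_S$ on the input edges and with $I_T$ on the output edges, and $W|_v$ is the tuple of indices on $e(v,1),\dots,e(v,d_v)$. The quantum max-flow is $\mathrm{QMF}(G,c)=\max_{\mathcal T}\operatorname{rank}\beta(G,c;\mathcal T)$. An edge cut set is a set $C\subseteq E$ for which there is a partition $S\sqcup T\sqcup V=\bar S\sqcup\bar T$ with $S\subseteq\bar S$, $T\subseteq\bar T$, and $C$ equal to the set of edges having one endpoint in $\bar S$ and the other in $\bar T$. The quantum min-cut is $\mathrm{QMC}(G,c)=\min_C\prod_{e\in C}c_e$, the minimum taken over all edge cut sets $C$. *)

(* Defs.v *)
From HB Require Import structures.
From mathcomp Require Import all_boot all_order all_algebra.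
Set Implicit Arguments. Unset Strict Implicit. Unset Printing Implicit Defensive.
Import GRing.Theory Num.Theory.
Local Open Scope ring_scope.

(* Nodes are  (S + T) + V  : inputs, outputs, vertices.               *)
(* eS u / eT u : the edge e(u) incident to an input / output u,       *)
(* vends v : the ordered list e(v,1),...,e(v,d_v) of edge-ends at v.   *)

Section TensorNetwork.
Variables (S T V E : finType).

Definition node := ((S + T) + V)%type.

Section Cut.
Variables (ends : E -> node * node) (cap : E -> nat).

Definition cut_set (Sbar : {set node}) : {set E} :=
  [set e | ((ends e).1 \in Sbar) != ((ends e).2 \in Sbar)].

Definition valid_cut (Sbar : {set node}) : bool :=
  [forall u : S, (inl (inl u) : node) \in Sbar] &&
  [forall u : T, (inl (inr u) : node) \notin Sbar].

Definition is_QMC (n : nat) : Prop :=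
  (exists2 Sbar, valid_cut Sbar & (\prod_(e in cut_set Sbar) cap e)%N = n) /\
  (forall Sbar, valid_cut Sbar -> (n <= \prod_(e in cut_set Sbar) cap e)%N).
End Cut.

Section Flow.
Variables (R : fieldType) (cap : E -> nat) (eS : S -> E) (eT : T -> E)
          (vends : V -> seq E).

Definition assignment := {dffun forall e : E, 'I_(cap e)}.
Definition in_idx := {dffun forall u : S, 'I_(cap (eS u))}.
Definition out_idx := {dffun forall u : T, 'I_(cap (eT u))}.

(* A tensor assignment: T_v gives the component (T_v)_{i_1...i_{d_v}} for
   each index tuple (only tuples with i_k < c_{e(v,k)} are ever used). *)
Definition tensor_assignment := V -> seq nat -> R.

Definition contraction_entry (Tv : tensor_assignment)
    (IT : out_idx) (IS : in_idx) : R :=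
  \sum_(W : assignment | [forall u : S, W (eS u) == IS u] &&
                         [forall u : T, W (eT u) == IT u])
     \prod_(v : V) Tv v [seq (W e : nat) | e <- vends v].

(* matrix of beta(G,c;T) in the product bases (rows: V_T, columns: V_S) *)
Definition contraction_matrix (Tv : tensor_assignment)
    : 'M[R]_(#|{: out_idx}|, #|{: in_idx}|) :=
  \matrix_(i, j) contraction_entry Tv (enum_val i) (enum_val j).

Definition is_QMF (n : nat) : Prop :=
  (exists Tv : tensor_assignment, \rank (contraction_matrix Tv) = n) /\
  (forall Tv : tensor_assignment, (\rank (contraction_matrix Tv) <= n)%N).
End Flow.
End TensorNetwork.

(* inputs s1,s2,s3 = 0,1,2 : 'I_3 ; outputs t1,t2 = 0,1 : 'I_2 ;       *)
(* vertices v1,v2,v3 = 0,1,2 : 'I_3 ; edges 0..6 : 'I_7 :              *)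
(*  0: s2-v1 (2)  1: v1-v2 (2)  2: v1-v3 (2)  3: s1-v2 (2)             *)
(*  4: v2-t1 (3)  5: s3-v3 (2)  6: v3-t2 (3)                           *)

Definition exS := 'I_3.
Definition exT := 'I_2.
Definition exV := 'I_3.
Definition exE := 'I_7.

Definition ex_s (i : 'I_3) : node exS exT exV := inl (inl i).
Definition ex_t (i : 'I_2) : node exS exT exV := inl (inr i).
Definition ex_v (i : 'I_3) : node exS exT exV := inr i.

Definition o3 (k : nat) : 'I_3 := inord k.
Definition o2 (k : nat) : 'I_2 := inord k.
Definition o7 (k : nat) : 'I_7 := inord k.

Definition ex_ends (e : exE) : node exS exT exV * node exS exT exV :=
  nth (ex_s (o3 0), ex_v (o3 0))
    [:: (ex_s (o3 1), ex_v (o3 0));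
        (ex_v (o3 0), ex_v (o3 1));
        (ex_v (o3 0), ex_v (o3 2));
        (ex_s (o3 0), ex_v (o3 1));
        (ex_v (o3 1), ex_t (o2 0));
        (ex_s (o3 2), ex_v (o3 2));
        (ex_v (o3 2), ex_t (o2 1))]
    e.

Definition ex_cap (e : exE) : nat := nth 0%N [:: 2; 2; 2; 2; 3; 2; 3]%N e.

Definition ex_eS (u : exS) : exE := nth (o7 0) [:: o7 3; o7 0; o7 5] u.
Definition ex_eT (u : exT) : exE := nth (o7 0) [:: o7 4; o7 6] u.
Definition ex_vends (v : exV) : seq exE :=
  nth [::] [:: [:: o7 0; o7 1; o7 2]; [:: o7 1; o7 3; o7 4];
              [:: o7 2; o7 5; o7 6]] v.

(* Main.v *)
Require Import Defs.
From HB Require Import structures.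
From mathcomp Require Import all_boot all_order all_algebra.
From mathcomp Require Import ring zify.
Set Implicit Arguments. Unset Strict Implicit. Unset Printing Implicit Defensive.
Import GRing.Theory.
Local Open Scope ring_scope.

Section Core.
Variable C : fieldType.

Lemma sum4 (f : 'I_4 -> C) : \sum_(r < 4) f r = f (inord 0) + f (inord 1) + f (inord 2) + f (inord 3).
Proof.
rewrite !big_ord_recr big_ord0 /= add0r.
by congr (_ + _ + _ + _); congr f; apply/val_inj; rewrite /= inordK.
Qed.

Lemma ker34 (al : nat -> nat -> nat -> C) : exists u : nat -> nat -> C,
  (exists i a, [/\ (i < 2)%N, (a < 2)%N & u i a != 0]) /\
  forall p, (p < 3)%N -> \sum_(i < 2) \sum_(a < 2) al i a p * u i a = 0.
Proof.
pose Mx : 'M[C]_(4,3) := \matrix_(r, c) al (r %/ 2)%N (r %% 2)%N c.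
pose v := nz_row (kermx Mx).
have vnz : v != 0.
  rewrite nz_row_eq0 -mxrank_eq0 mxrank_ker.
  have := rank_leq_col Mx; lia.
have vker : v *m Mx = 0 by apply/sub_kermxP; exact: nz_row_sub.
exists (fun i a => v 0 (inord (i * 2 + a))); split.
  case: (pickP (fun c => v 0 c != 0)) => [c Hc | H].
    exists (c %/ 2)%N, (c %% 2)%N; split.
    - have := ltn_ord c; lia.
    - have := ltn_ord c; lia.
    - by rewrite -divn_eq inord_val.
  case/eqP: vnz; apply/matrixP => i j; rewrite (ord1 i) mxE.
  by have := H j; move/negbFE/eqP.
move=> p Hp.
have := congr1 (fun m : 'M[C]_(1,3) => m 0 (inord p)) vker; rewrite /= !mxE sum4 !mxE.
rewrite !big_ord_recr !big_ord0 /= !add0r !inordK //= => <-.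
ring.
Qed.
End Core.

Section Core.
Variable C : fieldType.

Definition Jv (u : nat -> nat -> C) i (c : nat) := if c == 0%N then u i 1%N else - u i 0%N.

Definition Mf (N : nat -> nat -> nat -> C) (u w : nat -> nat -> C) j i k :=
  \sum_(c < 2) \sum_(d < 2) Jv u i c * N j c d * Jv w k d.

Definition Gf (N : nat -> nat -> nat -> C) (Phi Psi : nat -> nat -> C) :=
  \sum_(a < 2) \sum_(b < 2) \sum_(c < 2) \sum_(d < 2)
    (N 0%N c d * N 1%N a b - N 1%N c d * N 0%N a b) * Phi c a * Psi d b.

Lemma G0 N Phi Psi : Phi 0%N 1%N = Phi 1%N 0%N -> Psi 0%N 1%N = Psi 1%N 0%N -> Gf N Phi Psi = 0.
Proof.
move=> h1 h2; rewrite /Gf !big_ord_recr !big_ord0 /= h1 h2; ring.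
Qed.

Lemma main_id (N : nat -> nat -> nat -> C) (al be : nat -> nat -> C) (u w : nat -> nat -> C) :
  \sum_(i < 2) \sum_(a < 2) al i a * u i a = 0 ->
  \sum_(k < 2) \sum_(b < 2) be k b * w k b = 0 ->
  \sum_(i < 2) \sum_(j < 2) \sum_(k < 2)
     (if j == 0%N :> nat then - Mf N u w 1%N i k else Mf N u w 0%N i k) *
     (\sum_(a < 2) \sum_(b < 2) N j a b * al i a * be k b) = 0.
Proof.
move=> hA hB.
pose Phi c a := \sum_(i < 2) Jv u i c * al i a.
pose Psi d b := \sum_(k < 2) Jv w k d * be k b.
have e : \sum_(i < 2) \sum_(j < 2) \sum_(k < 2)
     (if j == 0%N :> nat then - Mf N u w 1%N i k else Mf N u w 0%N i k) *
     (\sum_(a < 2) \sum_(b < 2) N j a b * al i a * be k b) = Gf N Phi Psi.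
  rewrite /Gf /Phi /Psi /Mf /Jv !big_ord_recr !big_ord0 /=; ring.
rewrite e; apply: G0.
  apply/eqP; rewrite -subr_eq0; apply/eqP; rewrite -hA /Phi /Jv !big_ord_recr !big_ord0 /=; ring.
apply/eqP; rewrite -subr_eq0; apply/eqP; rewrite -hB /Psi /Jv !big_ord_recr !big_ord0 /=; ring.
Qed.

Lemma fb_id (N : nat -> nat -> nat -> C) (al be : nat -> nat -> C) (u w : nat -> nat -> C) a0 b0 :
  (a0 < 2)%N -> (b0 < 2)%N ->
  \sum_(i < 2) \sum_(a < 2) al i a * u i a = 0 ->
  \sum_(k < 2) \sum_(b < 2) be k b * w k b = 0 ->
  (forall i k, (i < 2)%N -> (k < 2)%N -> Mf N u w 0%N i k = 0) ->
  \sum_(i < 2) \sum_(j < 2) \sum_(k < 2)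
     (if j == 0%N :> nat then u i a0 * w k b0 else 0) *
     (\sum_(a < 2) \sum_(b < 2) N j a b * al i a * be k b) = 0.
Proof.
move=> ha hb hA hB hM.
pose l (a : nat) : C := if a == a0 then 1 else 0.
pose m (b : nat) : C := if b == b0 then 1 else 0.
pose ga i := \sum_(c < 2) Jv (fun _ => l) i c * al i c.
pose de k := \sum_(d < 2) Jv (fun _ => m) k d * be k d.
pose R a := \sum_(i < 2) Jv u i a * ga i.
pose R' b := \sum_(k < 2) Jv w k b * de k.
have eA : \sum_(i < 2) \sum_(j < 2) \sum_(k < 2)
     (if j == 0%N :> nat then u i a0 * w k b0 else 0) *
     (\sum_(a < 2) \sum_(b < 2) N j a b * al i a * be k b) =
   \sum_(a < 2) \sum_(b < 2) N 0%N a b *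
      (\sum_(i < 2) u i a0 * al i a) * (\sum_(k < 2) w k b0 * be k b).
  rewrite !big_ord_recr !big_ord0 /=; ring.
have eB : forall a : 'I_2, \sum_(i < 2) u i a0 * al i a = R a.
  move=> a; suff -> : \sum_(i < 2) u i a0 * al i a = l a * (\sum_(i < 2) \sum_(a < 2) al i a * u i a) + R a
    by rewrite hA mulr0 add0r.
  rewrite /R /ga /l /Jv; clear R ga l eA.
  case: a => [[|[|//]]] _ /=; case: a0 ha => [|[|//]] _;
    rewrite !big_ord_recr !big_ord0 /=; ring.
have eB' : forall b : 'I_2, \sum_(k < 2) w k b0 * be k b = R' b.
  move=> b; suff -> : \sum_(k < 2) w k b0 * be k b = m b * (\sum_(k < 2) \sum_(b < 2) be k b * w k b) + R' b
    by rewrite hB mulr0 add0r.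
  rewrite /R' /de /m /Jv; clear R' de m eA.
  case: b => [[|[|//]]] _ /=; case: b0 hb => [|[|//]] _;
    rewrite !big_ord_recr !big_ord0 /=; ring.
rewrite eA.
under eq_bigr => a _ do under eq_bigr => b _ do rewrite eB eB'.
have e2 : \sum_(a < 2) \sum_(b < 2) N 0%N a b * R a * R' b =
   \sum_(i < 2) \sum_(k < 2) ga i * de k * Mf N u w 0%N i k.
  rewrite /R /R' /Mf; rewrite !big_ord_recr !big_ord0 /=; ring.
rewrite e2 big1 // => i _; rewrite big1 // => k _.
by rewrite hM // mulr0.
Qed.
End Core.

Lemma core_ker (C : fieldType) (N A B : nat -> nat -> nat -> C) :
  exists X : nat -> nat -> nat -> C,
  (exists i j k, [/\ (i < 2)%N, (j < 2)%N, (k < 2)%N & X i j k != 0]) /\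
  forall p q, (p < 3)%N -> (q < 3)%N ->
    \sum_(i < 2) \sum_(j < 2) \sum_(k < 2)
      X i j k * (\sum_(a < 2) \sum_(b < 2) N j a b * A i a p * B k b q) = 0.
Proof.
have [u [[i0 [a0 [hi0 ha0 hu]]] hA]] := ker34 A.
have [w [[k0 [b0 [hk0 hb0 hw]]] hB]] := ker34 B.
case: (boolP [exists i : 'I_2, exists k : 'I_2, Mf N u w 0%N i k != 0]).
  case/existsP => i /existsP [k hM].
  exists (fun i j k => if j == 0%N then - Mf N u w 1%N i k else Mf N u w 0%N i k); split.
    by exists i, 1%N, k; split.
  move=> p q hp hq.
  exact: (@main_id C N (fun i a => A i a p) (fun k b => B k b q) u w (hA p hp) (hB q hq)).
move=> hM.
have hM' : forall i k, (i < 2)%N -> (k < 2)%N -> Mf N u w 0%N i k = 0.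
  move=> i k hi hk; apply/eqP; apply: contraT => h; case/negP: hM.
  by apply/existsP; exists (Ordinal hi); apply/existsP; exists (Ordinal hk).
exists (fun i j k => if j == 0%N then u i a0 * w k b0 else 0); split.
  by exists i0, 0%N, k0; split => //=; rewrite mulf_neq0.
move=> p q hp hq.
exact: (@fb_id C N (fun i a => A i a p) (fun k b => B k b q) u w a0 b0 ha0 hb0 (hA p hp) (hB q hq) hM').
Qed.

Notation ASG := (assignment ex_cap).
Notation IN := (in_idx ex_cap ex_eS).
Notation OUT := (out_idx ex_cap ex_eT).

Lemma o3K n : (n < 3)%N -> nat_of_ord (o3 n) = n. Proof. by move=> h; rewrite /o3 inordK. Qed.
Lemma o2K n : (n < 2)%N -> nat_of_ord (o2 n) = n. Proof. by move=> h; rewrite /o2 inordK. Qed.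
Lemma o7K n : (n < 7)%N -> nat_of_ord (o7 n) = n. Proof. by move=> h; rewrite /o7 inordK. Qed.
Lemma o3E (u : 'I_3) : u = o3 u. Proof. by rewrite /o3 inord_val. Qed.
Lemma o2E (u : 'I_2) : u = o2 u. Proof. by rewrite /o2 inord_val. Qed.
Lemma o7E (u : 'I_7) : u = o7 u. Proof. by rewrite /o7 inord_val. Qed.

Lemma forall3 (P : 'I_3 -> Prop) : (forall n, (n < 3)%N -> P (o3 n)) -> forall u, P u.
Proof. by move=> H u; rewrite (o3E u); apply: H. Qed.
Lemma forall2 (P : 'I_2 -> Prop) : (forall n, (n < 2)%N -> P (o2 n)) -> forall u, P u.
Proof. by move=> H u; rewrite (o2E u); apply: H. Qed.
Lemma forall7 (P : 'I_7 -> Prop) : (forall n, (n < 7)%N -> P (o7 n)) -> forall u, P u.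
Proof. by move=> H u; rewrite (o7E u); apply: H. Qed.

Lemma cap7 n : (n < 7)%N -> ex_cap (o7 n) = nth 0%N [:: 2; 2; 2; 2; 3; 2; 3]%N n.
Proof. by move=> h; rewrite /ex_cap o7K. Qed.

Lemma eS0 : ex_eS (o3 0) = o7 3. Proof. by rewrite /ex_eS o3K. Qed.
Lemma eS1 : ex_eS (o3 1) = o7 0. Proof. by rewrite /ex_eS o3K. Qed.
Lemma eS2 : ex_eS (o3 2) = o7 5. Proof. by rewrite /ex_eS o3K. Qed.
Lemma eT0 : ex_eT (o2 0) = o7 4. Proof. by rewrite /ex_eT o2K. Qed.
Lemma eT1 : ex_eT (o2 1) = o7 6. Proof. by rewrite /ex_eT o2K. Qed.

Lemma capS (u : exS) : ex_cap (ex_eS u) = 2%N.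
Proof.
move: u; apply: forall3 => -[|[|[|//]]] _; rewrite ?eS0 ?eS1 ?eS2 cap7 //.
Qed.
Lemma capT (u : exT) : ex_cap (ex_eT u) = 3%N.
Proof.
move: u; apply: forall2 => -[|[|//]] _; rewrite ?eT0 ?eT1 cap7 //.
Qed.
Lemma cap_gt0 (e : exE) : (0 < ex_cap e)%N.
Proof. move: e; apply: forall7 => -[|[|[|[|[|[|[|//]]]]]]] _; rewrite cap7 //. Qed.

Lemma ord_lt n m (x : 'I_n) : n = m -> (x < m)%N. Proof. by move=> <-. Qed.

Definition sI (IS : IN) n : nat := IS (o3 n).
Definition sT (IT : OUT) n : nat := IT (o2 n).
Lemma sI_lt IS n : (sI IS n < 2)%N. Proof. exact: ord_lt (capS _). Qed.
Lemma sT_lt IT n : (sT IT n < 3)%N. Proof. exact: ord_lt (capT _). Qed.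

Lemma valW_eq (W : ASG) e e' : e = e' -> nat_of_ord (W e) = W e'. Proof. by move=> ->. Qed.
Lemma valS_eq (IS : IN) e e' : e = e' -> nat_of_ord (IS e) = IS e'. Proof. by move=> ->. Qed.

Definition fv (IT : OUT) (IS : IN) (a b : nat) (n : nat) : nat :=
  nth 0%N [:: sI IS 1; a; b; sI IS 0; sT IT 0; sI IS 2; sT IT 1] n.

Definition mkW (IT : OUT) (IS : IN) (a b : nat) : ASG :=
  finfun (fun e : exE => Ordinal (ltn_pmod (fv IT IS a b e) (cap_gt0 e))).

Lemma mkWv IT IS a b n : (n < 7)%N -> nat_of_ord (mkW IT IS a b (o7 n)) = 
   (fv IT IS a b n %% nth 0%N [:: 2; 2; 2; 2; 3; 2; 3]%N n)%N.
Proof. by move=> h; rewrite ffunE /= o7K // cap7. Qed.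

Lemma prod3 (C : fieldType) (F : 'I_3 -> C) : \prod_(v < 3) F v = F (o3 0) * F (o3 1) * F (o3 2).
Proof.
rewrite !big_ord_recr big_ord0 /= mul1r.
by congr (_ * _ * _); congr F; apply/val_inj; rewrite /= o3K.
Qed.

Definition hW (W : ASG) : 'I_2 * 'I_2 := (inord (W (o7 1)), inord (W (o7 2))).

Lemma entryE (C : fieldType) (Tv : exV -> seq nat -> C) (IT : OUT) (IS : IN) :
  contraction_entry ex_vends Tv IT IS =
  \sum_(a < 2) \sum_(b < 2) Tv (o3 0) [:: sI IS 1; nat_of_ord a; nat_of_ord b] * Tv (o3 1) [:: nat_of_ord a; sI IS 0; sT IT 0]
     * Tv (o3 2) [:: nat_of_ord b; sI IS 2; sT IT 1].
Proof.
rewrite /contraction_entry.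
rewrite (reindex_onto (fun ab : 'I_2 * 'I_2 => mkW IT IS ab.1 ab.2) hW); last first.
  move=> W /andP[/forallP HS /forallP HT]; apply/ffunP; move=> e; apply/val_inj.
  move: e; apply: forall7 => n hn /=; rewrite mkWv //.
  have sS := fun u => congr1 val (eqP (HS u)).
  have sT' := fun u => congr1 val (eqP (HT u)).
  case: n hn => [|[|[|[|[|[|[|//]]]]]]] _; rewrite /fv /=.
  - by rewrite -(valW_eq W eS1) sS modn_small // sI_lt.
  - by rewrite inordK ?modn_small //; apply: ord_lt; rewrite cap7.
  - by rewrite inordK ?modn_small //; apply: ord_lt; rewrite cap7.
  - by rewrite -(valW_eq W eS0) sS modn_small // sI_lt.
  - by rewrite -(valW_eq W eT0) sT' modn_small // sT_lt.
  - by rewrite -(valW_eq W eS2) sS modn_small // sI_lt.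
  - by rewrite -(valW_eq W eT1) sT' modn_small // sT_lt.
rewrite (eq_bigl (fun _ => true)); last first.
  move=> [a b] /=; apply/andP; split.
    apply/andP; split; apply/forallP.
      apply: forall3 => n hn; apply/eqP/val_inj => /=.
      case: n hn => [|[|[|//]]] _.
      - by rewrite (valW_eq _ eS0) mkWv // /= modn_small // sI_lt.
      - by rewrite (valW_eq _ eS1) mkWv // /= modn_small // sI_lt.
      - by rewrite (valW_eq _ eS2) mkWv // /= modn_small // sI_lt.
    apply: forall2 => n hn; apply/eqP/val_inj => /=.
    case: n hn => [|[|//]] _.
    - by rewrite (valW_eq _ eT0) mkWv // /= modn_small // sT_lt.
    - by rewrite (valW_eq _ eT1) mkWv // /= modn_small // sT_lt.
  by rewrite /hW /= !mkWv // /fv /= !modn_small ?ltn_ord // !inord_val.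
rewrite -(pair_bigA _ (fun (a b : 'I_2) => \prod_(v : exV) Tv v [seq nat_of_ord (mkW IT IS a b e) | e <- ex_vends v])) /=; apply: eq_bigr => a _; apply: eq_bigr => b _.
rewrite prod3 /ex_vends !o3K //= !mkWv //= /fv /= !modn_small ?sI_lt ?sT_lt ?ltn_ord //.
Qed.

Lemma capS_gt0 (u : exS) : (0 < ex_cap (ex_eS u))%N. Proof. exact: cap_gt0. Qed.
Lemma capT_gt0 (u : exT) : (0 < ex_cap (ex_eT u))%N. Proof. exact: cap_gt0. Qed.

Definition mkIS (i j k : nat) : IN :=
  finfun (fun u : exS => Ordinal (ltn_pmod (nth 0%N [:: i; j; k] u) (capS_gt0 u))).
Definition mkIT (p q : nat) : OUT :=
  finfun (fun u : exT => Ordinal (ltn_pmod (nth 0%N [:: p; q] u) (capT_gt0 u))).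

Lemma sI_mk i j k n : (n < 3)%N -> sI (mkIS i j k) n = (nth 0%N [:: i; j; k] n %% 2)%N.
Proof. by move=> h; rewrite /sI ffunE /= capS o3K. Qed.
Lemma sT_mk p q n : (n < 2)%N -> sT (mkIT p q) n = (nth 0%N [:: p; q] n %% 3)%N.
Proof. by move=> h; rewrite /sT ffunE /= capT o2K. Qed.

Definition hIS (IS : IN) : ('I_2 * 'I_2) * 'I_2 :=
  ((inord (sI IS 0), inord (sI IS 1)), inord (sI IS 2)).

Lemma bijIS : bijective (fun p : ('I_2 * 'I_2) * 'I_2 => mkIS p.1.1 p.1.2 p.2).
Proof.
exists hIS.
  move=> [[i j] k]; rewrite /hIS /= !sI_mk //= !modn_small ?ltn_ord //.
  by rewrite !inord_val.
move=> IS; apply/ffunP; move=> u; apply/val_inj => /=; move: u.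
apply: forall3 => n hn; rewrite ffunE /=.
have hI := sI_lt IS; rewrite /hIS /=.
case: n hn => [|[|[|//]]] _ /=; by rewrite o3K //= [in LHS]capS inordK // modn_small.
Qed.

Lemma sumIN (C : fieldType) (G : IN -> C) :
  \sum_(IS : IN) G IS = \sum_(i < 2) \sum_(j < 2) \sum_(k < 2) G (mkIS i j k).
Proof.
rewrite (pair_bigA _ (fun (i j : 'I_2) => \sum_(k < 2) G (mkIS i j k))) /=.
rewrite (pair_bigA _ (fun (ij : 'I_2 * 'I_2) (k : 'I_2) => G (mkIS ij.1 ij.2 k))) /=.
rewrite (reindex (fun p : ('I_2 * 'I_2) * 'I_2 => mkIS p.1.1 p.1.2 p.2)) //.
exact: onW_bij bijIS.
Qed.

Lemma cardIN : #|{: IN}| = 8%N.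
Proof. by rewrite -(bij_eq_card bijIS) !card_prod !card_ord. Qed.

Lemma rank_le7 (C : fieldType) (Tv : exV -> seq nat -> C) :
  (\rank (contraction_matrix ex_cap ex_eS ex_eT ex_vends Tv) <= 7)%N.
Proof.
set M := contraction_matrix _ _ _ _ _.
have [X [[i0 [j0 [k0 [hi hj hk hX]]]] hker]] :=
  core_ker (fun j a b => Tv (o3 0) [:: j; a; b]) (fun i a p => Tv (o3 1) [:: a; i; p])
           (fun k b q => Tv (o3 2) [:: b; k; q]).
pose v : 'rV[C]_#|{: IN}| := \row_c X (sI (enum_val c) 0) (sI (enum_val c) 1) (sI (enum_val c) 2).
have v0 : v *m M^T = 0.
  apply/rowP => r; rewrite !mxE.
  transitivity (\sum_(IS : IN) X (sI IS 0) (sI IS 1) (sI IS 2) *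
                 contraction_entry ex_vends Tv (enum_val r) IS).
    rewrite (big_enum_val (A := {: IN}) (fun IS => X (sI IS 0) (sI IS 1) (sI IS 2) *
                 contraction_entry ex_vends Tv (enum_val r) IS)) /=.
    by apply: eq_bigr => c _; rewrite !mxE.
  rewrite sumIN.
  apply: etrans (hker (sT (enum_val r) 0) (sT (enum_val r) 1) (sT_lt _ _) (sT_lt _ _)).
  apply: eq_bigr => i _; apply: eq_bigr => j _; apply: eq_bigr => k _.
  by rewrite entryE !sI_mk //= !modn_small ?ltn_ord.
have vnz : v != 0.
  apply/negP => /eqP /rowP /(_ (enum_rank (mkIS i0 j0 k0))).
  rewrite !mxE enum_rankK !sI_mk //= !modn_small //.
  by apply/eqP.
have : (v <= kermx M^T)%MS by apply/sub_kermxP.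
move/mxrankS; rewrite mxrank_ker mxrank_tr; have c8 := cardIN.
have : \rank v != 0%N by rewrite mxrank_eq0.
lia.
Qed.

Lemma rank_mxsub (F : fieldType) m n m' n' (f : 'I_m' -> 'I_m) (g : 'I_n' -> 'I_n) (A : 'M[F]_(m, n)) :
  (\rank (mxsub f g A) <= \rank A)%N.
Proof.
rewrite mxsubrc rowsubE; apply: leq_trans (mxrankM_maxr _ _) _.
rewrite -[A in colsub g A]mulmx1 -mulmx_colsub; exact: mxrankM_maxl.
Qed.

Definition Tvw (C : fieldType) (v : exV) (s : seq nat) : C :=
  if nat_of_ord v == 0%N then
    (if (nth 0%N s 0 == nth 0%N s 1) && (nth 0%N s 1 == nth 0%N s 2) then 1 else 0)
  else (if nth 0%N s 2 == (nth 0%N s 1 + nth 0%N s 0)%N then 1 else 0).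

Lemma entW (C : fieldType) (IT : OUT) (IS : IN) :
  contraction_entry ex_vends (Tvw C) IT IS =
  if (sT IT 0 == sI IS 0 + sI IS 1)%N && (sT IT 1 == sI IS 2 + sI IS 1)%N then 1 else 0.
Proof.
rewrite entryE /Tvw !o3K //= !big_ord_recr !big_ord0 /=.
move: (sI IS 1) (sI_lt IS 1) => j; case: j => [|[|//]] _ /=;
 rewrite /= ?(mul0r, mulr0, mul1r, mulr1, add0r, addr0) //;
 by case: (sT IT 0 == _); case: (sT IT 1 == _); rewrite /= ?(mul0r, mulr0, mul1r, mulr1, add0r, addr0).
Qed.

Definition pp (n : nat) := nth 0%N [:: 0; 1; 0; 1; 2; 1; 2]%N n.
Definition qq (n : nat) := nth 0%N [:: 0; 0; 1; 1; 1; 2; 2]%N n.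
Definition ii (n : nat) := nth 0%N [:: 0; 1; 0; 1; 1; 0; 1]%N n.
Definition jj (n : nat) := nth 0%N [:: 0; 0; 0; 0; 1; 1; 1]%N n.
Definition kk (n : nat) := nth 0%N [:: 0; 0; 1; 1; 0; 1; 1]%N n.

Lemma keyb (s t : 'I_7) :
  ((pp s %% 3 == ii t %% 2 + jj t %% 2) && (qq s %% 3 == kk t %% 2 + jj t %% 2))%N = (s == t).
Proof.
by case: s => [[|[|[|[|[|[|[|//]]]]]]] ?]; case: t => [[|[|[|[|[|[|[|//]]]]]]] ?].
Qed.

Lemma rank_ge7 (C : fieldType) :
  (7 <= \rank (contraction_matrix ex_cap ex_eS ex_eT ex_vends (Tvw C)))%N.
Proof.
set M := contraction_matrix _ _ _ _ _.
pose f (s : 'I_7) := enum_rank (mkIT (pp s) (qq s)).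
pose g (t : 'I_7) := enum_rank (mkIS (ii t) (jj t) (kk t)).
have e : mxsub f g M = 1%:M.
  apply/matrixP => s t; rewrite !mxE !enum_rankK entW !sT_mk // !sI_mk //=.
  by rewrite keyb; case: (s == t).
by have := rank_mxsub f g M; rewrite e mxrank1.
Qed.

Lemma cut_prod (Sbar : {set node exS exT exV}) :
  (\prod_(e in cut_set ex_ends Sbar) ex_cap e =
  \prod_(e < 7) (if ((ex_ends e).1 \in Sbar) != ((ex_ends e).2 \in Sbar) then ex_cap e else 1))%N.
Proof. by rewrite big_mkcond /=; apply: eq_bigr => e _; rewrite inE. Qed.

Lemma qmc : is_QMC ex_ends ex_cap 8.
Proof.
split.
  exists [set x : node exS exT exV | if x is inl (inl _) then true else false].
    by apply/andP; split; apply/forallP => u; rewrite inE.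
  rewrite cut_prod !big_ord_recr big_ord0 /= !inE /=.
  done.
move=> Sbar /andP[/forallP HS /forallP HT].
rewrite cut_prod !big_ord_recr big_ord0 /= /ex_s /ex_t /ex_v.
rewrite !HS. rewrite !(negbTE (HT _)).
case: (inr (o3 0) \in Sbar); case: (inr (o3 1) \in Sbar); case: (inr (o3 2) \in Sbar) => //.
Qed.

Close Scope ring_scope.

Theorem mainTheorem9 (C : numClosedFieldType) :
  is_QMC ex_ends ex_cap 8 /\
  is_QMF C ex_cap ex_eS ex_eT ex_vends 7.
Proof.
split; first exact: qmc.
split.
  exists (Tvw C); apply/eqP; rewrite eqn_leq rank_le7 rank_ge7.
  done.
move=> Tv; exact: rank_le7.
Qed.
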